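(* Let $k\ge2$, $n>2^k$, $c=2^k-2$, and assume $d=\gcd(c,n-1)>1$; let $w=(n-1)/d$ and let $y_v=0$ if $v$ is a multiple of $d$ and $y_v=\frac{1}{w(d-1)}$ otherwise, for $v\in\{0,\dots,n-1\}$. For any two disjoint intervals $[u\oplus\ell]_{n-1}$ and $[v\oplus s]_{n-1}$ (with $u,v$ nonnegative integers and $\ell,s$ nonnegative integers), $$y([u\oplus\ell]_{n-1})+y([v\oplus s]_{n-1})\le y([u\oplus(\ell+s+1)]_{n-1}).$$
   Context: For integers $u,\ell$ and $r\ge1$, $[u\oplus\ell]_r=\{w\bmod r: u\le w\le u+\ell-1\}$. For $S\subseteq\{0,\dots,n-1\}$, $y(S)=\sum_{v\in S}y_v$. *)

(* Defs.v *)
From mathcomp Require Import all_boot all_order all_algebra.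
Unset Printing Implicit Defensive.
Import Order.TTheory GRing.Theory Num.Theory.
Local Open Scope ring_scope.

(* [u (+) l]_r = { w mod r : u <= w <= u + l - 1 }, viewed as a subset of
   {0,...,n-1} = 'I_n (here r = n - 1 < n, so all residues lie in 'I_n). *)
Definition cint (n r u l : nat) : {set 'I_n} :=
  [set i : 'I_n | has (fun w => (w %% r)%N == nat_of_ord i) (iota u l)].

Definition dd (n k : nat) : nat := gcdn (2 ^ k - 2) (n - 1).
Definition ww (n k : nat) : nat := ((n - 1) %/ dd n k)%N.

Definition yv (R : realFieldType) (n k v : nat) : R :=
  if (dd n k %| v)%N then 0 else 1 / ((ww n k)%:R * (dd n k - 1)%:R).

Definition ysum (R : realFieldType) (n k : nat) (S : {set 'I_n}) : R :=
  \sum_(v in S) yv R n k v.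

(* Main.v *)
Require Import Defs.
From mathcomp Require Import all_boot all_order all_algebra.
From mathcomp Require Import zify.
Import Order.TTheory GRing.Theory Num.Theory.
Definition Mc (d a L : nat) : nat := (\sum_(i < L) ~~ (d %| a + i))%N.
Definition Nc (d a L : nat) : nat := (\sum_(i < L) (d %| a + i))%N.

Lemma MN d a L : (Mc d a L + Nc d a L)%N = L.
Proof.
rewrite /Mc /Nc; elim: L => [|L IH]; first by rewrite !big_ord0.
by rewrite !big_ord_recr addnACA IH; case: (d %| a + L); rewrite ?addn1 ?addn0.
Qed.

Lemma Nc_g d a L : (0 < d)%N ->
  (Nc d a L + (a + d.-1) %/ d)%N = ((a + L + d.-1) %/ d)%N.
Proof.
move=> d0; elim: L => [|L IH]; first by rewrite /Nc big_ord0 addn0.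
rewrite {1}/Nc big_ord_recr -/(Nc d a L) /= addnAC IH.
have -> : (a + L.+1 + d.-1 = (a + L + d.-1).+1)%N by lia.
rewrite divnS //.
have -> : ((a + L + d.-1).+1 = a + L + d)%N by lia.
by rewrite (dvdn_addl (a + L) (dvdnn d)) addnC.
Qed.

Lemma Mc_add d a l t : Mc d a (l + t) = (Mc d a l + Mc d (a + l) t)%N.
Proof.
elim: t => [|t IH]; first by rewrite addn0 {3}/Mc big_ord0 addn0.
by rewrite addnS {1}/Mc big_ord_recr -/(Mc d a (l + t)) IH /Mc big_ord_recr /= addnA addnA.
Qed.

Lemma Mc_mono d a b s : (0 < d)%N -> (Mc d a s <= Mc d b s.+1)%N.
Proof.
move=> d0.
have h1 := MN d a s; have h2 := MN d b s.+1.
have g1 := Nc_g d a s d0; have g2 := Nc_g d b s.+1 d0.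
have e1 := divnD (a + d.-1) s d0.
have e2 := divnD (b + d.-1) s.+1 d0.
have E1 : (a + s + d.-1 = a + d.-1 + s)%N by rewrite addnAC.
have E2 : (b + s.+1 + d.-1 = b + d.-1 + s.+1)%N by rewrite addnAC.
rewrite E1 e1 in g1; rewrite E2 e2 in g2.
have e3 := divnS s d0.
have r1 := ltn_pmod (b + d.-1) d0.
have B : (d %| s.+1)%N -> (d <= (b + d.-1) %% d + s.+1 %% d)%N = false.
  by move=> /eqP ->; rewrite addn0 leqNgt r1.
rewrite e3 in g2.
have l1 := leq_b1 (d <= (a + d.-1) %% d + s %% d)%N.
have l2 := leq_b1 (d <= (b + d.-1) %% d + s.+1 %% d)%N.
case D: (d %| s.+1)%N g2 => g2.
  rewrite (B D) in g2.
  move: g1 g2 h1 h2 l1; clear e1 e2 E1 E2 e3 r1 B D l2.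
  move: (nat_of_bool (d <= (a + d.-1) %% d + s %% d)%N) ((a + d.-1) %/ d) ((b + d.-1) %/ d) (s %/ d)
  (Mc d a s) (Nc d a s) (Mc d b s.+1) (Nc d b s.+1) => *; simpl in *; lia.
move: g1 g2 h1 h2 l1 l2; clear e1 e2 E1 E2 e3 r1 B D.
move: (nat_of_bool (d <= (a + d.-1) %% d + s %% d)%N) (nat_of_bool (d <= (b + d.-1) %% d + s.+1 %% d)%N) ((a + d.-1) %/ d) ((b + d.-1) %/ d) (s %/ d)
  (Mc d a s) (Nc d a s) (Mc d b s.+1) (Nc d b s.+1) => *; simpl in *; lia.
Qed.

Local Open Scope ring_scope.
Section Main.
Variables (R : realFieldType) (n k : nat).
Let m := (n - 1)%N.
Hypothesis m0 : (0 < m)%N.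
Hypothesis mn : (m < n)%N.
Hypothesis dm : (dd n k %| m)%N.
Let d := dd n k.
Let c : R := ( 1 / ((ww n k)%:R * (dd n k - 1)%:R))%R.

Lemma c_ge0 : 0 <= c.
Proof. by rewrite /c divr_ge0 // mulr_ge0. Qed.

Lemma yv_mod x : yv R n k (x %% m) = if (d %| x)%N then 0 else c.
Proof. by rewrite /yv /dvdn modn_dvdm. Qed.

Lemma yv_ge0 x : 0 <= yv R n k x.
Proof. rewrite /yv; case: ifP => // _; exact: c_ge0. Qed.

Lemma ysum_sub (A B : {set 'I_n}) : A \subset B -> ysum R n k A <= ysum R n k B.
Proof.
move=> AB; rewrite /ysum (big_setID (A := B) A) /=.
have -> : B :&: A = A by apply/setIidPr.
rewrite lerDl; apply: sumr_ge0 => i _; exact: yv_ge0.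
Qed.

Lemma cint_sum u l : (l <= m)%N -> ysum R n k (cint n m u l) = c *+ Mc d u l.
Proof.
elim: l => [|l IH] hl.
  rewrite /Mc big_ord0 /ysum.
  have -> : cint n m u 0 = set0 by apply/setP => i; rewrite !inE.
  by rewrite big_set0.
have hlt : ((u + l) %% m < n)%N by apply: leq_trans (ltn_pmod _ m0) (ltnW mn).
have E : cint n m u l.+1 = Ordinal hlt |: cint n m u l.
  apply/setP => i; rewrite !inE -addn1 iotaD has_cat /= orbF orbC.
  by congr (_ || _); rewrite eq_sym.
have nin : Ordinal hlt \notin cint n m u l.
  rewrite inE; apply/hasP => -[w]; rewrite mem_iota => /andP [h1 h2] /= /eqP he.
  have : (u + l == w %[mod m])%N by rewrite he.
  rewrite eqn_mod_dvd; last by lia.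
  move/(dvdn_leq); lia.
rewrite /ysum E big_setU1 //= -/(ysum _ _ _ _) IH; last by lia.
rewrite yv_mod /Mc big_ord_recr mulrnDr addrC.
by case: (d %| u + l)%N.
Qed.

Lemma cint_subm u l : cint n m u l \subset cint n m u m.
Proof.
apply/subsetP => i; rewrite !inE => /hasP [w]; rewrite mem_iota => /andP [h1 h2] /eqP he.
apply/hasP; exists (u + (w - u) %% m)%N.
  by rewrite mem_iota leq_addr /= ltn_add2l ltn_pmod.
by rewrite -he modnDmr subnKC.
Qed.

Lemma cint_subm2 u v l : cint n m v l \subset cint n m u m.
Proof.
apply/subsetP => i; rewrite !inE => /hasP [w]; rewrite mem_iota => /andP [h1 h2] /eqP he.
apply/hasP; exists (u + (w + (m - u %% m)) %% m)%N.
  by rewrite mem_iota leq_addr /= ltn_add2l ltn_pmod.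
rewrite -he modnDmr.
have E : (u + (w + (m - u %% m)) = (u %/ m).+1 * m + w)%N.
  have := divn_eq u m; have := ltn_pmod u m0; rewrite mulSnr.
  move: (u %/ m * m)%N (u %% m)%N => t r; lia.
by rewrite E modnMDl.
Qed.

Lemma cint_ge u l : (m <= l)%N -> cint n m u m \subset cint n m u l.
Proof.
move=> ml; apply/subsetP => i; rewrite !inE -(subnKC ml) iotaD has_cat.
by move=> ->.
Qed.

End Main.

Theorem lemma3p3 (R : realFieldType) (k n : nat) :
  (2 <= k)%N -> (2 ^ k < n)%N -> (1 < gcdn (2 ^ k - 2) (n - 1))%N ->
  forall u l v s : nat,
    [disjoint cint n (n - 1) u l & cint n (n - 1) v s] ->
    ysum R n k (cint n (n - 1) u l) + ysum R n k (cint n (n - 1) v s)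
      <= ysum R n k (cint n (n - 1) u (l + s + 1)).
Proof.
move=> k2 kn d1 u l v s dis.
have e4 : (4 <= 2 ^ k)%N by rewrite (_ : 4 = 2 ^ 2)%N // leq_exp2l.
have m0 : (0 < n - 1)%N by lia.
have mn : (n - 1 < n)%N by lia.
have dm : (dd n k %| n - 1)%N by rewrite /dd dvdn_gcdr.
have d0 : (0 < dd n k)%N by rewrite /dd; lia.
case: (leqP (n - 1) (l + s + 1)) => hm.
  apply: (@le_trans _ _ (ysum R n k (cint n (n - 1) u (n - 1)))).
    rewrite /ysum -bigU //=.
    rewrite (eq_bigl (fun i => i \in cint n (n-1) u l :|: cint n (n-1) v s)); last first.
      by move=> i; rewrite !inE.
    apply: (ysum_sub R n k (_ :|: _)); rewrite subUset cint_subm //=.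
    exact: (cint_subm2 n k m0 mn dm).
  by apply: (ysum_sub R n k); apply: cint_ge.
rewrite !cint_sum //; try lia.
rewrite -addnA Mc_add -mulrnDr ler_wpMn2l ?divr_ge0 ?mulr_ge0 // leq_add2l addn1.
exact: Mc_mono.
Qed.
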